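(* A hyperfield $F$ admits a Krasner valuation if and only if the additive hypergroup $(F,+,0)$ of $F$ is superiorly canonical.
   Context: A canonical hypergroup is a triple $(H,+,0)$ where $H\neq\emptyset$, $+$ assigns to each pair a subset $x+y\subseteq H$ (for sets $A+B:=\bigcup_{a\in A,b\in B}a+b$), $0\in H$, such that $+$ is associative and commutative, each $x$ has a unique $-x$ with $0\in x+(-x)$, and $z\in x+y\Rightarrow y\in z+(-x)$; write $x-y:=x+(-y)$. A hyperfield is $(F,+,\cdot,0,1)$ with $(F,+,0)$ a canonical hypergroup, $(F,\cdot)$ commutative with $0$ absorbing, $x(y+z)=xy+xz$, and $F\setminus\{0\}$ an abelian group with neutral $1\neq 0$. A canonical hypergroup $H$ is superiorly canonical if: (SCH1) $x\in x+y$ implies $x+y=\{x\}$; (SCH2) $(x+y)\cap(z+t)\neq\emptyset$ implies $x+y\subseteq z+t$ or $z+t\subseteq x+y$; (SCH3) for $x\neq y$ and $z,t\in x-y$, $z-z=t-t$; (SCH4) if $x\in z-z$ and $y\notin z-z$ then $x-x\subseteq y-y$. Valuation on $F$: for an ordered abelian group $\Gamma$ and $\infty>\Gamma$ with $\gamma+\infty=\infty+\gamma=\infty$, a surjective map $v:F\to\Gamma\cup\{\infty\}$ with $vx=\infty\iff x=0$, $v(xy)=vx+vy$, $z\in x+y\Rightarrow vz\ge\min\{vx,vy\}$; $vF:=v(F\setminus\{0\})$. An initial segment of $\Gamma$ is $\rho\subseteq\Gamma$ with $\delta\in\rho,\gamma<\delta\Rightarrow\gamma\in\rho$; $\rho+\gamma:=\{\delta+\gamma:\delta\in\rho\}$;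 ''$\alpha>\rho+\gamma$'' means $\alpha\notin\rho+\gamma$. Krasner valuation: a valuation $v$ on $F$ such that (KVH1) for all $x,y\in F$ with $0\notin x+y$, $v(x+y)$ is a singleton; (KVH2) there is an initial segment $\rho_v$ of $vF$ with $0\in\rho_v$ (the norm) such that for all $x,y,z,t\in F$ with $z\in x+y$: $t\in x+y$ iff $vs>\rho_v+\min\{vx,vy\}$ for all $s\in z-t$. *)

(* Defs.v *)
Set Implicit Arguments.

(* hadd x y z  means  z \in x + y. *)
Definition canonical_hypergroup (H : Type) (hadd : H -> H -> H -> Prop)
  (zero : H) (neg : H -> H) : Prop :=
  (forall x y z w, (exists u, hadd x y u /\ hadd u z w) <->
                   (exists u, hadd y z u /\ hadd x u w)) /\
  (forall x y z, hadd x y z <-> hadd y x z) /\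
  (forall x z, hadd x zero z <-> z = x) /\
  (forall x, hadd x (neg x) zero) /\
  (forall x y, hadd x y zero -> y = neg x) /\
  (forall x y z, hadd x y z -> hadd z (neg x) y).

Record Hyperfield := {
  hcar :> Type;
  hadd : hcar -> hcar -> hcar -> Prop;
  hneg : hcar -> hcar;
  hmul : hcar -> hcar -> hcar;
  hzero : hcar;
  hone : hcar;
  hf_canonical : canonical_hypergroup hadd hzero hneg;
  hf_mulA : forall x y z, hmul x (hmul y z) = hmul (hmul x y) z;
  hf_mulC : forall x y, hmul x y = hmul y x;
  hf_mul1 : forall x, hmul hone x = x;
  hf_mul0 : forall x, hmul hzero x = hzero;
  hf_distr : forall x y z w,
      (exists u, hadd y z u /\ w = hmul x u) <-> hadd (hmul x y) (hmul x z) w;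
  hf_one_neq0 : hone <> hzero;
  hf_mul_neq0 : forall x y, x <> hzero -> y <> hzero -> hmul x y <> hzero;
  hf_inv : forall x, x <> hzero -> exists y, hmul x y = hone
}.

Arguments hadd {h}.
Arguments hneg {h}.
Arguments hmul {h}.
Arguments hzero {h}.
Arguments hone {h}.

Definition hsub {F : Hyperfield} (x y : F) : F -> Prop := hadd x (hneg y).

Definition superiorly_canonical (F : Hyperfield) : Prop :=
  (forall x y : F, hadd x y x -> forall w, hadd x y w <-> w = x) /\
  (forall x y z t : F, (exists w, hadd x y w /\ hadd z t w) ->
      (forall w, hadd x y w -> hadd z t w) \/
      (forall w, hadd z t w -> hadd x y w)) /\
  (forall x y z t : F, x <> y -> hsub x y z -> hsub x y t ->
      forall w, hsub z z w <-> hsub t t w) /\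
  (forall x y z : F, hsub z z x -> ~ hsub z z y ->
      forall w, hsub x x w -> hsub y y w).

Record OrderedAbGroup := {
  gcar :> Type;
  gadd : gcar -> gcar -> gcar;
  gzero : gcar;
  gopp : gcar -> gcar;
  gle : gcar -> gcar -> Prop;
  g_addA : forall a b c, gadd a (gadd b c) = gadd (gadd a b) c;
  g_addC : forall a b, gadd a b = gadd b a;
  g_add0 : forall a, gadd gzero a = a;
  g_addN : forall a, gadd (gopp a) a = gzero;
  g_le_refl : forall a, gle a a;
  g_le_trans : forall a b c, gle a b -> gle b c -> gle a c;
  g_le_anti : forall a b, gle a b -> gle b a -> a = b;
  g_le_total : forall a b, gle a b \/ gle b a;
  g_le_add : forall a b c, gle a b -> gle (gadd a c) (gadd b c)
}.

Arguments gadd {o}.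
Arguments gzero {o}.
Arguments gle {o}.

(* Gamma \cup {oo}, with None = oo *)
Definition ext_le {G : OrderedAbGroup} (a b : option G) : Prop :=
  match a, b with
  | _, None => True
  | None, Some _ => False
  | Some a', Some b' => gle a' b'
  end.

Definition ext_add {G : OrderedAbGroup} (a b : option G) : option G :=
  match a, b with
  | Some a', Some b' => Some (gadd a' b')
  | _, _ => None
  end.

Definition is_ext_min {G : OrderedAbGroup} (a b m : option G) : Prop :=
  (m = a /\ ext_le a b) \/ (m = b /\ ext_le b a).

Definition glt {G : OrderedAbGroup} (a b : G) : Prop := gle a b /\ a <> b.

Definition is_valuation (F : Hyperfield) (G : OrderedAbGroup)
  (v : F -> option G) : Prop :=
  (forall a : option G, exists x : F, v x = a) /\
  (forall x : F, v x = None <-> x = hzero) /\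
  (forall x y : F, v (hmul x y) = ext_add (v x) (v y)) /\
  (forall x y z : F, hadd x y z ->
      forall m, is_ext_min (v x) (v y) m -> ext_le m (v z)).

Definition value_group (F : Hyperfield) (G : OrderedAbGroup)
  (v : F -> option G) (g : G) : Prop :=
  exists x : F, x <> hzero /\ v x = Some g.

Arguments is_valuation {F G}.
Arguments value_group {F G}.

Definition initial_segment {G : OrderedAbGroup} (S rho : G -> Prop) : Prop :=
  (forall d, rho d -> S d) /\
  (forall d g, rho d -> S g -> glt g d -> rho g).

Definition in_shift {G : OrderedAbGroup} (rho : G -> Prop) (g : G)
  (alpha : option G) : Prop :=
  exists d, rho d /\ alpha = Some (gadd d g).

Definition krasner_valuation (F : Hyperfield) (G : OrderedAbGroup)
  (v : F -> option G) : Prop :=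
  is_valuation v /\
  (forall x y : F, ~ hadd x y hzero ->
     exists g : option G, forall a, (exists z, hadd x y z /\ v z = a) <-> a = g) /\
  (exists rho : G -> Prop,
     initial_segment (value_group v) rho /\ rho gzero /\
     forall (x y z t : F) (g : G), hadd x y z ->
       is_ext_min (v x) (v y) (Some g) ->
       (hadd x y t <-> forall s, hsub z t s -> ~ in_shift rho g (v s))).

Arguments krasner_valuation {F G}.

Definition admits_krasner_valuation (F : Hyperfield) : Prop :=
  exists (G : OrderedAbGroup) (v : F -> option G), krasner_valuation v.

(* Main.v *)
Require Import Defs.
From Stdlib Require Import Classical ClassicalEpsilon FunctionalExtensionality PropExtensionality ProofIrrelevance.

Section Basics.
Context {F : Hyperfield}.

Lemma h_assoc : forall x y z w : F, (exists u, hadd x y u /\ hadd u z w) <->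
                   (exists u, hadd y z u /\ hadd x u w).
Proof. destruct (hf_canonical F) as [H _]. exact H. Qed.
Lemma h_comm : forall x y z : F, hadd x y z <-> hadd y x z.
Proof. destruct (hf_canonical F) as [_ [H _]]. exact H. Qed.
Lemma h_neut : forall x z : F, hadd x hzero z <-> z = x.
Proof. destruct (hf_canonical F) as [_ [_ [H _]]]. exact H. Qed.
Lemma h_inv : forall x : F, hadd x (hneg x) hzero.
Proof. destruct (hf_canonical F) as [_ [_ [_ [H _]]]]. exact H. Qed.
Lemma h_uniq : forall x y : F, hadd x y hzero -> y = hneg x.
Proof. destruct (hf_canonical F) as [_ [_ [_ [_ [H _]]]]]. exact H. Qed.
Lemma h_rev : forall x y z : F, hadd x y z -> hadd z (hneg x) y.
Proof. destruct (hf_canonical F) as [_ [_ [_ [_ [_ H]]]]]. exact H. Qed.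

Lemma zero_add (x z : F) : hadd hzero x z <-> z = x.
Proof. rewrite h_comm. apply h_neut. Qed.

Lemma neg_neg (x : F) : hneg (hneg x) = x.
Proof. symmetry. apply h_uniq. apply h_comm. apply h_inv. Qed.

Lemma neg_zero : hneg (@hzero F) = hzero.
Proof. pose proof (h_inv hzero) as H. apply zero_add in H. auto. Qed.

Lemma add_ne (x y : F) : exists z, hadd x y z.
Proof.
  destruct (proj2 (h_assoc x y (hneg y) x)) as [u [Hu _]].
  - exists hzero. split. apply h_inv. apply h_neut. reflexivity.
  - exists u; exact Hu.
Qed.

Lemma mul1r (x : F) : hmul x hone = x.
Proof. rewrite hf_mulC. apply hf_mul1. Qed.
Lemma mul0r (x : F) : hmul x hzero = hzero.
Proof. rewrite hf_mulC. apply hf_mul0. Qed.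

Lemma mul_neg1 (x : F) : hmul x (hneg hone) = hneg x.
Proof.
  apply h_uniq.
  pose proof (proj1 (hf_distr F x hone (hneg hone) hzero)) as H.
  rewrite mul1r in H. apply H. exists hzero. split. apply h_inv. symmetry. apply mul0r.
Qed.

Lemma neg_mul (c x : F) : hmul c (hneg x) = hneg (hmul c x).
Proof. rewrite <- (mul_neg1 x), <- (mul_neg1 (hmul c x)). apply hf_mulA. Qed.

Lemma mul_add (c x y z : F) : hadd x y z -> hadd (hmul c x) (hmul c y) (hmul c z).
Proof. intro H. apply hf_distr. exists z. auto. Qed.

Lemma neg_add (x y z : F) : hadd x y z -> hadd (hneg x) (hneg y) (hneg z).
Proof.
  intro H. pose proof (mul_add (hneg hone) _ _ _ H) as H0.
  rewrite !(hf_mulC F (hneg hone)), !mul_neg1 in H0. exact H0.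
Qed.

Definition Dset (x a : F) : Prop := hadd x (hneg x) a.

Lemma Dset_iff (x a : F) : Dset x a <-> hadd x a x.
Proof.
  unfold Dset. split; intro H.
  - apply h_comm in H. apply h_rev in H. rewrite neg_neg in H. apply h_comm. exact H.
  - apply h_rev in H. exact H.
Qed.

Lemma Dset_0 (x : F) : Dset x hzero.
Proof. apply h_inv. Qed.

Lemma Dset_zero (a : F) : Dset hzero a <-> a = hzero.
Proof. unfold Dset. rewrite neg_zero. apply h_neut. Qed.

Lemma Dset_neg (x a : F) : Dset x a -> Dset x (hneg a).
Proof.
  unfold Dset. intro H. apply neg_add in H. rewrite neg_neg in H. apply h_comm. exact H.
Qed.

Lemma Dset_mul (c x a : F) : Dset (hmul c x) a <-> exists u, Dset x u /\ a = hmul c u.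
Proof.
  unfold Dset. rewrite <- neg_mul. symmetry. apply hf_distr.
Qed.

Definition Deq (x y : F) := forall a, Dset x a <-> Dset y a.

Lemma Deq_refl x : Deq x x. Proof. intro; tauto. Qed.
Lemma Deq_sym x y : Deq x y -> Deq y x. Proof. intros H a; rewrite (H a); tauto. Qed.
Lemma Deq_trans x y z : Deq x y -> Deq y z -> Deq x z.
Proof. intros H1 H2 a; rewrite (H1 a); apply H2. Qed.

Lemma Dsub_mul (c x y : F) : (forall a, Dset x a -> Dset y a) ->
  forall a, Dset (hmul c x) a -> Dset (hmul c y) a.
Proof.
  intros H a Ha. apply Dset_mul in Ha. destruct Ha as [u [Hu ->]].
  apply Dset_mul. exists u. auto.
Qed.

Lemma Deq_mul (c x y : F) : Deq x y -> Deq (hmul c x) (hmul c y).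
Proof. intros H a; split; apply Dsub_mul; intro; apply H. Qed.

Lemma Deq_mul_r (c x y : F) : Deq x y -> Deq (hmul x c) (hmul y c).
Proof. intro H. rewrite !(hf_mulC F _ c). apply Deq_mul. auto. Qed.

Lemma Dset_scale (x u : F) : Dset hone u -> Dset x (hmul x u).
Proof.
  intro H. pose proof (proj2 (Dset_mul x hone (hmul x u)) (ex_intro _ u (conj H eq_refl))) as H0.
  rewrite mul1r in H0. exact H0.
Qed.

Lemma Dset_split (x b : F) : Dset x b -> exists u, Dset hone u /\ b = hmul x u.
Proof. intro H. rewrite <- (mul1r x) in H. apply Dset_mul in H. exact H. Qed.

Lemma four (x y p x' y' q s : F) : hadd x y p -> hadd x' y' q -> hadd p q s ->
  exists a c, hadd x x' a /\ hadd y y' c /\ hadd a c s.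
Proof.
  intros H1 H2 H3.
  destruct (proj1 (h_assoc x y q s) (ex_intro _ p (conj H1 H3))) as [u1 [Hu1 Hs]].
  apply h_comm in Hu1.
  destruct (proj1 (h_assoc x' y' y u1) (ex_intro _ q (conj H2 Hu1))) as [u2 [Hu2 Hu1']].
  destruct (proj2 (h_assoc x x' u2 s) (ex_intro _ u1 (conj Hu1' Hs))) as [a [Ha Has]].
  exists a, u2. repeat split; auto. apply h_comm; auto.
Qed.

Lemma finv_ex (x : F) : x <> hzero -> exists y, hmul x y = hone /\ y <> hzero.
Proof.
  intro Hx. destruct (hf_inv F Hx) as [y Hy]. exists y. split; auto.
  intro e. subst. rewrite mul0r in Hy. apply (hf_one_neq0 F). auto.
Qed.

Lemma cancel_l (x xi u : F) : hmul x xi = hone -> hmul xi (hmul x u) = u.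
Proof. intro H. rewrite hf_mulA, (hf_mulC F xi x), H. apply hf_mul1. Qed.

End Basics.

Section Dir2.
Variable F : Hyperfield.
Hypothesis SC : superiorly_canonical F.

Lemma sch1_D (x a : F) : Dset x a -> forall w, hadd x a w <-> w = x.
Proof. intro H. destruct SC as [S1 _]. apply S1. apply Dset_iff. exact H. Qed.

Lemma Dset_closed (x a c w : F) : Dset x a -> Dset x c -> hadd a c w -> Dset x w.
Proof.
  intros Ha Hc Hw. apply Dset_iff. destruct (add_ne x w) as [p Hp].
  destruct (proj2 (h_assoc x a c p) (ex_intro _ w (conj Hw Hp))) as [u [H1 H2]].
  apply (sch1_D x a Ha) in H1. subst u.
  apply (sch1_D x c Hc) in H2. subst p. exact Hp.
Qed.

Lemma D_ultra (x y z : F) : hadd x y z -> (forall a, Dset y a -> Dset x a) ->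
  forall b, Dset z b -> Dset x b.
Proof.
  intros H Hs b Hb. destruct (Dset_split z b Hb) as [u [Hu ->]].
  pose proof (mul_add u x y z H) as H0.
  rewrite (hf_mulC F z u).
  apply Dset_closed with (hmul u x) (hmul u y); auto.
  - rewrite hf_mulC. apply Dset_scale. auto.
  - apply Hs. rewrite hf_mulC. apply Dset_scale. auto.
Qed.

Lemma not_Dset_self (x : F) : x <> hzero -> ~ Dset x x.
Proof.
  intros Hx H. apply Dset_neg in H. pose proof (sch1_D x _ H hzero) as E.
  apply Hx. symmetry. apply E. apply h_inv.
Qed.

Lemma absorb (x y z a t : F) : hadd x y z -> Dset x a -> hadd z a t -> hadd x y t.
Proof.
  intros H Ha Ht.
  destruct (proj1 (h_assoc x y a t) (ex_intro _ z (conj H Ht))) as [u [Hu1 Hu2]].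
  apply h_comm in Hu1.
  destruct (proj2 (h_assoc x a y t) (ex_intro _ u (conj Hu1 Hu2))) as [u' [H1 H2]].
  apply (sch1_D x a Ha) in H1. subst. exact H2.
Qed.

Lemma ball (x y z : F) : (forall a, Dset y a -> Dset x a) -> hadd x y z ->
  forall t, hadd x y t <-> (forall s, hadd z (hneg t) s -> Dset x s).
Proof.
  intros Hs H t. split.
  - intros Ht s Hst. apply neg_add in Ht.
    destruct (four _ _ _ _ _ _ _ H Ht Hst) as [a [c [Ha [Hc Hac]]]].
    apply Dset_closed with a c; auto.
  - intros Hall. destruct (add_ne z (hneg t)) as [s Hs0].
    pose proof (Hall s Hs0) as HD.
    apply h_comm in Hs0. apply h_rev in Hs0. rewrite neg_neg in Hs0. apply h_rev in Hs0.
    apply absorb with z (hneg s); auto. apply Dset_neg. auto.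
Qed.

Lemma L_lemma (a r : F) : Dset hone a -> a <> hzero -> Deq a r -> Dset hone r.
Proof.
  intros Ha Hnz He. destruct (finv_ex a Hnz) as [ai [Hai Hainz]].
  pose proof (Deq_mul ai _ _ He) as He2. rewrite (hf_mulC F ai a), Hai in He2.
  pose proof (Dset_scale (hmul ai r) a Ha) as H1.
  assert (E : hmul (hmul ai r) a = r).
  { rewrite (hf_mulC F ai r), <- hf_mulA, (hf_mulC F ai a), Hai. apply mul1r. }
  rewrite E in H1. apply He2. exact H1.
Qed.

Definition nzf (x : F) : F :=
  if excluded_middle_informative (x = hzero) then hone else x.
Lemma nzf_nz (x : F) : nzf x <> hzero.
Proof. unfold nzf. destruct (excluded_middle_informative _); auto. apply hf_one_neq0. Qed.
Lemma nzf_id (x : F) : x <> hzero -> nzf x = x.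
Proof. unfold nzf. destruct (excluded_middle_informative _); tauto. Qed.

Definition Gcar := {S : F -> Prop | exists x : F, x <> hzero /\ S = Dset x}.
Definition mk (x : F) : Gcar :=
  exist _ (Dset (nzf x)) (ex_intro _ (nzf x) (conj (nzf_nz x) eq_refl)).
Definition rep (S : Gcar) : F :=
  proj1_sig (constructive_indefinite_description _ (proj2_sig S)).
Lemma rep_spec S : rep S <> hzero /\ proj1_sig S = Dset (rep S).
Proof.
  unfold rep. destruct (constructive_indefinite_description _ _) as [x Hx]. simpl. exact Hx.
Qed.
Lemma rep_nz S : rep S <> hzero. Proof. apply rep_spec. Qed.

Lemma Gext (S T : Gcar) : proj1_sig S = proj1_sig T -> S = T.
Proof.
  destruct S as [S HS], T as [T HT]. simpl. intro e. subst. f_equal. apply proof_irrelevance.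
Qed.
Lemma mk_proj (x : F) : x <> hzero -> proj1_sig (mk x) = Dset x.
Proof. intro. simpl. rewrite nzf_id; auto. Qed.
Lemma Deq_eq (x y : F) : Deq x y -> Dset x = Dset y.
Proof. intro H. apply functional_extensionality. intro a. apply propositional_extensionality. apply H. Qed.
Lemma mk_eq (x y : F) : x <> hzero -> y <> hzero -> Deq x y -> mk x = mk y.
Proof. intros. apply Gext. rewrite !mk_proj; auto. apply Deq_eq; auto. Qed.
Lemma mk_inj (x y : F) : x <> hzero -> y <> hzero -> mk x = mk y -> Deq x y.
Proof.
  intros Hx Hy H a. apply (f_equal (@proj1_sig _ _)) in H. rewrite !mk_proj in H; auto.
  rewrite H. tauto.
Qed.
Lemma mk_rep S : mk (rep S) = S.
Proof. apply Gext. destruct (rep_spec S) as [H1 H2]. rewrite mk_proj; auto. Qed.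
Lemma Deq_rep_mk (x : F) : x <> hzero -> Deq (rep (mk x)) x.
Proof.
  intro Hx. destruct (rep_spec (mk x)) as [_ H]. rewrite mk_proj in H by auto.
  intro a. rewrite H. tauto.
Qed.

Definition finv (x : F) : F :=
  match excluded_middle_informative (x = hzero) with
  | left _ => hone
  | right h => proj1_sig (constructive_indefinite_description _ (hf_inv F h))
  end.
Lemma finv_spec (x : F) : x <> hzero -> hmul x (finv x) = hone.
Proof.
  intro Hx. unfold finv. destruct (excluded_middle_informative _) as [e|n]; [contradiction|].
  destruct (constructive_indefinite_description _ _) as [y Hy]. simpl. exact Hy.
Qed.
Lemma finv_nz (x : F) : x <> hzero -> finv x <> hzero.
Proof.
  intros Hx e. pose proof (finv_spec x Hx) as H. rewrite e, mul0r in H.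
  apply (hf_one_neq0 F). auto.
Qed.

Definition gaddG (S T : Gcar) : Gcar := mk (hmul (rep S) (rep T)).
Definition gzeroG : Gcar := mk hone.
Definition goppG (S : Gcar) : Gcar := mk (finv (rep S)).
Definition gleG (S T : Gcar) : Prop := forall a, proj1_sig T a -> proj1_sig S a.

Lemma mulnz (x y : F) : x <> hzero -> y <> hzero -> hmul x y <> hzero.
Proof. apply hf_mul_neq0. Qed.

Lemma gaddG_A a b c : gaddG a (gaddG b c) = gaddG (gaddG a b) c.
Proof.
  unfold gaddG. apply mk_eq; try apply mulnz; try apply rep_nz.
  apply Deq_trans with (hmul (rep a) (hmul (rep b) (rep c))).
  - apply Deq_mul. apply Deq_rep_mk. apply mulnz; apply rep_nz.
  - rewrite hf_mulA. apply Deq_mul_r. apply Deq_sym. apply Deq_rep_mk. apply mulnz; apply rep_nz.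
Qed.
Lemma gaddG_C a b : gaddG a b = gaddG b a.
Proof. unfold gaddG. rewrite hf_mulC. reflexivity. Qed.
Lemma gaddG_0 a : gaddG gzeroG a = a.
Proof.
  unfold gaddG, gzeroG. transitivity (mk (rep a)); [|apply mk_rep].
  apply mk_eq; try apply mulnz; try apply rep_nz.
  apply Deq_trans with (hmul hone (rep a)).
  - apply Deq_mul_r. apply Deq_rep_mk. apply hf_one_neq0.
  - rewrite hf_mul1. apply Deq_refl.
Qed.
Lemma gaddG_N a : gaddG (goppG a) a = gzeroG.
Proof.
  unfold gaddG, goppG, gzeroG. apply mk_eq; try apply mulnz; try apply rep_nz; try apply hf_one_neq0.
  apply Deq_trans with (hmul (finv (rep a)) (rep a)).
  - apply Deq_mul_r. apply Deq_rep_mk. apply finv_nz, rep_nz.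
  - rewrite hf_mulC, finv_spec by apply rep_nz. apply Deq_refl.
Qed.
Lemma gleG_refl a : gleG a a. Proof. intros x; auto. Qed.
Lemma gleG_trans a b c : gleG a b -> gleG b c -> gleG a c.
Proof. unfold gleG. auto. Qed.
Lemma gleG_anti a b : gleG a b -> gleG b a -> a = b.
Proof.
  intros H1 H2. apply Gext. apply functional_extensionality. intro x.
  apply propositional_extensionality. split; auto.
Qed.
Lemma gleG_total a b : gleG a b \/ gleG b a.
Proof.
  destruct (rep_spec a) as [_ Ea]. destruct (rep_spec b) as [_ Eb].
  destruct SC as [_ [S2 _]].
  destruct (S2 (rep a) (hneg (rep a)) (rep b) (hneg (rep b)))
    as [H|H].
  - exists hzero. split; apply h_inv.
  - right. intros x Hx. rewrite Eb. rewrite Ea in Hx. apply H. exact Hx.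
  - left. intros x Hx. rewrite Ea. rewrite Eb in Hx. apply H. exact Hx.
Qed.
Lemma gleG_add a b c : gleG a b -> gleG (gaddG a c) (gaddG b c).
Proof.
  unfold gleG, gaddG. intro H.
  rewrite !mk_proj by (apply mulnz; apply rep_nz).
  rewrite !(hf_mulC F _ (rep c)). apply Dsub_mul.
  destruct (rep_spec a) as [_ Ea]. destruct (rep_spec b) as [_ Eb].
  rewrite Ea, Eb in H. exact H.
Qed.

Definition GG : OrderedAbGroup :=
  {| gcar := Gcar; gadd := gaddG; gzero := gzeroG; gopp := goppG; gle := gleG;
     g_addA := gaddG_A; g_addC := gaddG_C; g_add0 := gaddG_0; g_addN := gaddG_N;
     g_le_refl := gleG_refl; g_le_trans := gleG_trans; g_le_anti := gleG_anti;
     g_le_total := gleG_total; g_le_add := gleG_add |}.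

Definition vv (x : F) : option GG :=
  if excluded_middle_informative (x = hzero) then None else Some (mk x).
Lemma vv_z : vv hzero = None.
Proof. unfold vv. destruct (excluded_middle_informative _); congruence. Qed.
Lemma vv_nz (x : F) : x <> hzero -> vv x = Some (mk x).
Proof. intro. unfold vv. destruct (excluded_middle_informative _); tauto. Qed.

Lemma gle_mk (x y : F) : x <> hzero -> y <> hzero ->
  (@gle GG (mk x) (mk y) <-> forall a, Dset y a -> Dset x a).
Proof. intros Hx Hy. simpl. unfold gleG. rewrite !mk_proj by auto. tauto. Qed.

Lemma sub_of_le (x y : F) : x <> hzero -> ext_le (vv x) (vv y) ->
  forall a, Dset y a -> Dset x a.
Proof.
  intros Hx Hle a Ha. destruct (classic (y = hzero)) as [->|Hy].
  - apply Dset_zero in Ha. subst. apply Dset_0.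
  - rewrite vv_nz in Hle by auto. rewrite vv_nz in Hle by auto. simpl in Hle.
    apply (proj1 (gle_mk x y Hx Hy) Hle). auto.
Qed.

Lemma ult_core (x y z : F) : hadd x y z -> ext_le (vv x) (vv y) -> ext_le (vv x) (vv z).
Proof.
  intros H Hle. destruct (classic (z = hzero)) as [->|Hz].
  - rewrite vv_z. destruct (vv x); exact I.
  - destruct (classic (x = hzero)) as [->|Hx].
    + exfalso. rewrite vv_z in Hle. destruct (classic (y = hzero)) as [->|Hy].
      * apply zero_add in H. contradiction.
      * rewrite vv_nz in Hle by auto. exact Hle.
    + rewrite !vv_nz by auto. simpl. apply gle_mk; auto.
      apply D_ultra with y; auto. apply sub_of_le; auto.
Qed.

Definition rhoG (d : GG) : Prop := exists r : F, r <> hzero /\ ~ Dset hone r /\ d = mk r.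

Lemma shift_iff (x s : F) : x <> hzero -> (in_shift rhoG (mk x) (vv s) <-> ~ Dset x s).
Proof.
  intro Hx. destruct (classic (s = hzero)) as [->|Hs].
  - rewrite vv_z. split.
    + intros [d [_ e]]. discriminate.
    + intro H. exfalso. apply H. apply Dset_0.
  - rewrite vv_nz by auto. split.
    + intros [d [[r [Hr [Hn ->]]] e0]] HD.
      assert (e : mk s = gaddG (mk r) (mk x)) by (change (Some (mk s) = Some (gaddG (mk r) (mk x))) in e0; congruence).
      unfold gaddG in e.
      apply mk_inj in e; auto; [| apply mulnz; apply rep_nz].
      assert (e2 : Deq s (hmul r x)).
      { apply Deq_trans with (1 := e). apply Deq_trans with (hmul r (rep (mk x))).
        - apply Deq_mul_r. apply Deq_rep_mk. auto.
        - apply Deq_mul. apply Deq_rep_mk. auto. }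
      destruct (Dset_split x s HD) as [u [Hu ->]].
      assert (Hunz : u <> hzero). { intro. subst. apply Hs. apply mul0r. }
      destruct (finv_ex x Hx) as [xi [Hxi _]].
      pose proof (Deq_mul xi _ _ e2) as e3.
      rewrite (cancel_l x xi u Hxi), (hf_mulC F r x), (cancel_l x xi r Hxi) in e3.
      apply Hn. apply L_lemma with u; auto.
    + intro HnD. destruct (finv_ex x Hx) as [xi [Hxi Hxinz]].
      assert (Eq : hmul (hmul s xi) x = s).
      { rewrite <- hf_mulA, (hf_mulC F xi x), Hxi. apply mul1r. }
      exists (mk (hmul s xi)). split.
      * exists (hmul s xi). repeat split; auto. apply mulnz; auto.
        intro H1. apply HnD. pose proof (Dset_scale x _ H1) as H2.
        rewrite (hf_mulC F s xi), (hf_mulC F x (hmul xi s)), <- hf_mulA, (hf_mulC F s x),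
          hf_mulA, (hf_mulC F xi x), Hxi, hf_mul1 in H2.
        exact H2.
      * f_equal. simpl. unfold gaddG. apply mk_eq; auto. apply mulnz; apply rep_nz.
        apply Deq_sym. apply Deq_trans with (hmul (hmul s xi) (rep (mk x))).
        -- apply Deq_mul_r. apply Deq_rep_mk. apply mulnz; auto.
        -- apply Deq_trans with (hmul (hmul s xi) x).
           ++ apply Deq_mul. apply Deq_rep_mk. auto.
           ++ rewrite Eq. apply Deq_refl.
Qed.

Lemma kv_core (x y z t : F) : x <> hzero -> ext_le (vv x) (vv y) -> hadd x y z ->
  (hadd x y t <-> forall s, hsub z t s -> ~ in_shift rhoG (mk x) (vv s)).
Proof.
  intros Hx Hle H. rewrite (ball x y z (sub_of_le x y Hx Hle) H t).
  unfold hsub. split; intros Hall s Hs.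
  - rewrite shift_iff by auto. pose proof (Hall s Hs). tauto.
  - pose proof (Hall s Hs) as H1. rewrite shift_iff in H1 by auto. apply NNPP. exact H1.
Qed.

Lemma krasner_vv : krasner_valuation vv.
Proof.
  split; [|split].
  - split; [|split; [|split]].
    + intros [S|].
      * exists (rep S). rewrite vv_nz by apply rep_nz. rewrite mk_rep. reflexivity.
      * exists hzero. apply vv_z.
    + intro x. unfold vv. destruct (excluded_middle_informative _); split; congruence.
    + intros x y. destruct (classic (x = hzero)) as [->|Hx].
      { rewrite hf_mul0, vv_z. reflexivity. }
      destruct (classic (y = hzero)) as [->|Hy].
      { rewrite mul0r, vv_z. destruct (vv x); reflexivity. }
      rewrite !vv_nz by (auto; apply mulnz; auto). simpl. f_equal. unfold gaddG.
      apply mk_eq; [apply mulnz; auto | apply mulnz; apply rep_nz |].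
      apply Deq_trans with (hmul (rep (mk x)) y).
      * apply Deq_mul_r. apply Deq_sym. apply Deq_rep_mk. auto.
      * apply Deq_mul. apply Deq_sym. apply Deq_rep_mk. auto.
    + intros x y z H m [[-> Hle]|[-> Hle]].
      * apply ult_core with y; auto.
      * apply ult_core with x; auto. apply h_comm. auto.
  - intros x y H0. destruct (add_ne x y) as [z0 Hz0]. exists (vv z0). intro a. split.
    + intros [z [Hz <-]].
      assert (Hznz : z <> hzero). { intro e. subst. contradiction. }
      assert (Hz0nz : z0 <> hzero). { intro e. subst. contradiction. }
      rewrite !vv_nz by auto. f_equal. apply mk_eq; auto.
      destruct SC as [_ [_ [S3 _]]].
      intro w. apply (S3 x (hneg y) z z0).
      * intro e. apply H0. rewrite e. apply h_comm. apply h_inv.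
      * unfold hsub. rewrite neg_neg. auto.
      * unfold hsub. rewrite neg_neg. auto.
    + intros ->. exists z0. auto.
  - exists rhoG. split; [|split].
    + split.
      * intros d [r [Hr [_ ->]]]. exists r. split; auto. apply vv_nz. auto.
      * intros d g [r [Hr [Hn ->]]] [x [Hx Hvx]] [Hle Hne].
        rewrite vv_nz in Hvx by auto. injection Hvx as <-.
        exists x. repeat split; auto. intro Hx1. apply Hne. apply mk_eq; auto.
        destruct SC as [_ [_ [_ S4]]].
        intro w. split.
        -- apply (S4 x r hone Hx1 Hn).
        -- apply (proj1 (gle_mk x r Hx Hr) Hle).
    + exists hone. repeat split. apply hf_one_neq0. apply not_Dset_self. apply hf_one_neq0.
    + intros x y z t g H [[Hg Hle]|[Hg Hle]].
      * assert (Hx : x <> hzero). { intro e. subst. rewrite vv_z in Hg. discriminate. }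
        rewrite vv_nz in Hg by auto. injection Hg as ->.
        apply kv_core; auto.
      * assert (Hy : y <> hzero). { intro e. subst. rewrite vv_z in Hg. discriminate. }
        rewrite vv_nz in Hg by auto. injection Hg as ->.
        rewrite h_comm. apply kv_core; auto. apply h_comm. auto.
Qed.

End Dir2.

Section GroupLemmas.
Variable G : OrderedAbGroup.

Lemma g_add0r (a : G) : gadd a gzero = a.
Proof. rewrite g_addC. apply g_add0. Qed.
Lemma g_addNr (a : G) : gadd a (gopp G a) = gzero.
Proof. rewrite g_addC. apply g_addN. Qed.
Lemma g_cancel (a b c : G) : gadd a c = gadd b c -> a = b.
Proof.
  intro H. apply (f_equal (fun w => gadd w (gopp G c))) in H.
  rewrite <- !g_addA, !g_addNr, !g_add0r in H. exact H.
Qed.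
Lemma g_double (c : G) : gadd c c = gzero -> c = gzero.
Proof.
  intro H. destruct (g_le_total _ c gzero) as [Hc|Hc].
  - pose proof (g_le_add _ _ _ c Hc) as H1. rewrite H, g_add0 in H1.
    apply g_le_anti; auto.
  - pose proof (g_le_add _ _ _ c Hc) as H1. rewrite H, g_add0 in H1.
    apply g_le_anti; auto.
Qed.
Lemma g_idem (c : G) : gadd c c = c -> c = gzero.
Proof. intro H. apply g_cancel with c. rewrite g_add0. exact H. Qed.
Lemma g_subK (b g : G) : gadd (gadd b (gopp G g)) g = b.
Proof. rewrite <- g_addA, g_addN. apply g_add0r. Qed.
Lemma g_addK (d g : G) : gadd (gadd d g) (gopp G g) = d.
Proof. rewrite <- g_addA, g_addNr. apply g_add0r. Qed.
End GroupLemmas.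

Section Dir1.
Context {F : Hyperfield} {G : OrderedAbGroup} (v : F -> option G) (rho : G -> Prop).
Hypothesis Hval : is_valuation v.
Hypothesis HK1 : forall x y : F, ~ hadd x y hzero ->
     exists g : option G, forall a, (exists z, hadd x y z /\ v z = a) <-> a = g.
Hypothesis Hinit : initial_segment (value_group v) rho.
Hypothesis Hr0 : rho gzero.
Hypothesis HK2 : forall (x y z t : F) (g : G), hadd x y z ->
       is_ext_min (v x) (v y) (Some g) ->
       (hadd x y t <-> forall s, hsub z t s -> ~ in_shift rho g (v s)).

Lemma v_none (x : F) : v x = None <-> x = hzero.
Proof. destruct Hval as [_ [H _]]. apply H. Qed.
Lemma v_mul (x y : F) : v (hmul x y) = ext_add (v x) (v y).
Proof. destruct Hval as [_ [_ [H _]]]. apply H. Qed.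
Lemma v_some (x : F) : x <> hzero -> exists g, v x = Some g.
Proof.
  intro Hx. destruct (v x) as [g|] eqn:E; [eauto|]. apply v_none in E. contradiction.
Qed.
Lemma vg_all (g : G) : value_group v g.
Proof.
  destruct Hval as [Hs [Hn _]]. destruct (Hs (Some g)) as [x Hx]. exists x. split; auto.
  intro e. apply Hn in e. congruence.
Qed.

Lemma rho_down (d' d : G) : gle d' d -> rho d -> rho d'.
Proof.
  intros Hle Hd. destruct (classic (d' = d)) as [->|Hne]; auto.
  destruct Hinit as [_ H]. apply H with d; auto. apply vg_all. split; auto.
Qed.

Lemma shift_self (g : G) : in_shift rho g (Some g).
Proof. exists gzero. split; auto. rewrite g_add0. reflexivity. Qed.

Lemma shift_down (g a b : G) : gle b a -> in_shift rho g (Some a) -> in_shift rho g (Some b).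
Proof.
  intros Hle [d [Hd e]]. injection e as ->.
  exists (gadd b (gopp G g)). split.
  - apply rho_down with d; auto.
    pose proof (g_le_add _ _ _ (gopp G g) Hle) as H. rewrite g_addK in H. exact H.
  - rewrite g_subK. reflexivity.
Qed.

Lemma shift_mono (g1 g2 : G) a : gle g1 g2 -> in_shift rho g1 a -> in_shift rho g2 a.
Proof.
  intros Hle [d [Hd ->]].
  exists (gadd (gadd d g1) (gopp G g2)). split.
  - apply rho_down with d; auto.
    pose proof (g_le_add _ _ _ (gopp G g2) (g_le_add _ _ _ d Hle)) as H.
    rewrite (g_addC _ g2 d), g_addK, (g_addC _ g1 d) in H. exact H.
  - rewrite g_subK. reflexivity.
Qed.

Lemma v_one : v hone = Some gzero.
Proof.
  destruct (v_some hone (hf_one_neq0 F)) as [e He].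
  pose proof (v_mul hone hone) as H. rewrite hf_mul1, He in H. simpl in H.
  injection H as H. rewrite He, (g_idem _ _ (eq_sym H)). reflexivity.
Qed.

Lemma v_negone : v (hneg hone) = Some gzero.
Proof.
  assert (Hnz : hneg (@hone F) <> hzero).
  { intro e. apply (hf_one_neq0 F). rewrite <- (neg_neg hone), e. apply neg_zero. }
  destruct (v_some _ Hnz) as [c Hc].
  pose proof (v_mul (hneg hone) (hneg hone)) as H.
  rewrite mul_neg1, neg_neg, v_one, Hc in H. simpl in H. injection H as H.
  rewrite Hc, (g_double _ _ (eq_sym H)). reflexivity.
Qed.

Lemma v_neg (x : F) : v (hneg x) = v x.
Proof.
  rewrite <- mul_neg1, v_mul, v_negone. destruct (v x); simpl; [rewrite g_add0r|]; reflexivity.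
Qed.

Lemma Dk (x a : F) (g : G) : v x = Some g -> (Dset x a <-> ~ in_shift rho g (v a)).
Proof.
  intro Hx. unfold Dset.
  rewrite (HK2 x (hneg x) hzero a g (h_inv x)).
  - unfold hsub. split.
    + intro H. rewrite <- v_neg. apply H. apply zero_add. reflexivity.
    + intros H s Hs. apply zero_add in Hs. subst. rewrite v_neg. exact H.
  - left. rewrite v_neg, Hx. split; auto. simpl. apply g_le_refl.
Qed.

Lemma min_exists (x y : F) : ~ (x = hzero /\ y = hzero) ->
  exists g, is_ext_min (v x) (v y) (Some g).
Proof.
  intro Hxy. destruct (v x) as [a|] eqn:Ea; destruct (v y) as [b|] eqn:Eb.
  - destruct (g_le_total _ a b) as [H|H].
    + exists a. left. auto.
    + exists b. right. auto.
  - exists a. left. simpl. auto.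
  - exists b. right. simpl. auto.
  - exfalso. apply Hxy. split; apply v_none; auto.
Qed.

Lemma dir1 : superiorly_canonical F.
Proof.
  split; [|split; [|split]].
  -
    intros x y H w. destruct (classic (x = hzero)) as [->|Hx].
    + apply zero_add in H. subst y. rewrite h_neut. tauto.
    + destruct (v_some x Hx) as [gx Hgx].
      assert (HD : Dset x y) by (apply Dset_iff; auto).
      rewrite (Dk x y gx Hgx) in HD.
      destruct (classic (y = hzero)) as [->|Hy].
      * apply h_neut.
      * destruct (v_some y Hy) as [gy Hgy].
        assert (Hle : gle gx gy).
        { destruct (g_le_total _ gx gy) as [h|h]; auto. exfalso. apply HD. rewrite Hgy.
          apply shift_down with gx; auto. apply shift_self. }
        rewrite (HK2 x y x w gx H).
        2: { left. rewrite Hgx, Hgy. auto. }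
        rewrite <- (HK2 x hzero x w gx).
        -- apply h_neut.
        -- apply h_neut. reflexivity.
        -- left. rewrite Hgx. split; auto. rewrite (proj2 (v_none hzero) eq_refl). exact I.
  -
    intros x y z t [w [H1 H2]].
    destruct (classic (x = hzero /\ y = hzero)) as [[-> ->]|Hxy].
    { left. intros w' H'. apply h_neut in H'. apply h_neut in H1. subst. auto. }
    destruct (classic (z = hzero /\ t = hzero)) as [[-> ->]|Hzt].
    { right. intros w' H'. apply h_neut in H'. apply h_neut in H2. subst. auto. }
    destruct (min_exists x y Hxy) as [g1 Hm1].
    destruct (min_exists z t Hzt) as [g2 Hm2].
    destruct (g_le_total _ g1 g2) as [Hle|Hle].
    + right. intros w' H'. rewrite (HK2 z t w w' g2 H2 Hm2) in H'.
      rewrite (HK2 x y w w' g1 H1 Hm1). intros s Hs Hsh. apply (H' s Hs).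
      apply shift_mono with g1; auto.
    + left. intros w' H'. rewrite (HK2 x y w w' g1 H1 Hm1) in H'.
      rewrite (HK2 z t w w' g2 H2 Hm2). intros s Hs Hsh. apply (H' s Hs).
      apply shift_mono with g2; auto.
  -
    intros x y z t Hxy Hz Ht w. unfold hsub in *.
    assert (H0 : ~ hadd x (hneg y) hzero).
    { intro H0. apply h_uniq in H0. apply Hxy. rewrite <- (neg_neg y), H0, neg_neg. reflexivity. }
    destruct (HK1 x (hneg y) H0) as [g Hg].
    assert (E1 : v z = g) by (apply Hg; eauto).
    assert (E2 : v t = g) by (apply Hg; eauto).
    assert (Hznz : z <> hzero) by (intro e; subst; contradiction).
    destruct (v_some z Hznz) as [gz Hgz].
    change (Dset z w <-> Dset t w).
    rewrite (Dk z w gz Hgz), (Dk t w gz). tauto. congruence.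
  -
    intros x y z Hx Hy w Hw.
    change (Dset z x) in Hx. change (~ Dset z y) in Hy. change (Dset x w) in Hw.
    change (Dset y w).
    destruct (classic (z = hzero)) as [->|Hz].
    { apply Dset_zero in Hx. subst x. apply Dset_zero in Hw. subst w. apply Dset_0. }
    destruct (classic (x = hzero)) as [->|Hxz].
    { apply Dset_zero in Hw. subst w. apply Dset_0. }
    assert (Hynz : y <> hzero). { intro e. subst. apply Hy. apply Dset_0. }
    destruct (v_some z Hz) as [gz Hgz].
    destruct (v_some x Hxz) as [gx Hgx].
    destruct (v_some y Hynz) as [gy Hgy].
    rewrite (Dk z x gz Hgz), Hgx in Hx.
    rewrite (Dk z y gz Hgz), Hgy in Hy.
    assert (Hle : gle gy gx).
    { destruct (g_le_total _ gy gx) as [h|h]; auto. exfalso. apply Hx.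
      apply shift_down with gy; auto. apply NNPP. auto. }
    rewrite (Dk x w gx Hgx) in Hw. rewrite (Dk y w gy Hgy).
    intro Hs. apply Hw. apply shift_mono with gy; auto.
Qed.

End Dir1.

Theorem theorem4p24 (F : Hyperfield) :
  admits_krasner_valuation F <-> superiorly_canonical F.
Proof.
  split.
  - intros [G [v [Hval [HK1 [rho [Hinit [Hr0 HK2]]]]]]].
    apply (dir1 v rho Hval HK1 Hinit Hr0 HK2).
  - intro SC. exists (GG F SC). exists (vv F SC). apply krasner_vv.
Qed.
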